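(* Let $n=2K+1$, let $m_1,\dots,m_n>0$ be fixed constants, and let $M=\{(x_1,\dots,x_n)\in\mathbb{R}^n: x_1<\dots<x_n\}$ carry the Poisson bracket determined by $\{x_i,x_k\}=\operatorname{sgn}(x_i-x_k)$, i.e. $\{f,g\}=\sum_{i,k}\operatorname{sgn}(x_i-x_k)\frac{\partial f}{\partial x_i}\frac{\partial g}{\partial x_k}$. Set $h_i=m_ie^{x_i}$, $g_i=m_ie^{-x_i}$, $$H_j=\sum_{\substack{I,J\in\binom{[2K+1]}{j}\\ I<J}} h_I g_J,\quad 1\le j\le K,\qquad H_c=\sum_{\substack{I\in\binom{[2K+1]}{K+1},\,J\in\binom{[2K+1]}{K}\\ I<J}} h_I g_J=\prod_{j=1}^{2K+1} m_j e^{(-1)^{j+1}x_j}.$$ Then the functions $H_1,\dots,H_K,H_c$ pairwise Poisson commute.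
   Context: $[k]=\{1,\dots,k\}$ and $\binom{[k]}{j}$ is the set of $j$-element subsets $I=\{i_1<\dots<i_j\}$ of $[k]$. For $I,J\in\binom{[k]}{j}$, $I<J$ means $i_1<j_1<\dots<i_j<j_j$; for $I\in\binom{[k]}{j+1}$, $J\in\binom{[k]}{j}$, $I<J$ means $i_1<j_1<\dots<i_j<j_j<i_{j+1}$. Also $h_I=\prod_{i\in I}h_i$, $g_J=\prod_{j\in J}g_j$. (These are constants of motion of the conservative mCH peakon system $\dot x_j=2\sum_{k\ne j}m_jm_ke^{-|x_j-x_k|}+4\sum_{1\le i<j<k\le n}m_im_ke^{-|x_i-x_k|}$ on $M$.) *)

(* Defs.v *)
From HB Require Import structures.
From mathcomp Require Import all_boot all_order all_algebra.
From mathcomp Require Import all_classical all_reals all_analysis.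
Set Implicit Arguments. Unset Strict Implicit. Unset Printing Implicit Defensive.
Import Order.TTheory GRing.Theory Num.Theory.
Local Open Scope ring_scope.

Fixpoint interlace (s t : seq nat) : seq nat :=
  match s, t with
  | a :: s', b :: t' => a :: b :: interlace s' t'
  | [::], _ => t
  | _, [::] => s
  end.

Definition idxs (n : nat) (I : {set 'I_n}) : seq nat :=
  sort leq [seq val i | i <- enum I].

(* I < J : i_1 < j_1 < i_2 < j_2 < ... (< i_{j+1} when #|I| = #|J| + 1) *)
Definition interl (n : nat) (I J : {set 'I_n}) : bool :=
  sorted ltn (interlace (idxs I) (idxs J)).

Section Peakon.
Variable R : realType.

Definition hI (n : nat) (m : 'I_n -> R) (I : {set 'I_n}) (x : 'I_n -> R) : R :=
  \prod_(i in I) (m i * expR (x i)).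
Definition gJ (n : nat) (m : 'I_n -> R) (J : {set 'I_n}) (x : 'I_n -> R) : R :=
  \prod_(j in J) (m j * expR (- x j)).

Definition Hsum (n : nat) (m : 'I_n -> R) (p q : nat) (x : 'I_n -> R) : R :=
  \sum_(I : {set 'I_n} | #|I| == p)
    \sum_(J : {set 'I_n} | (#|J| == q) && interl I J) hI m I x * gJ m J x.

Definition Hj (K : nat) (m : 'I_(K.*2.+1) -> R) (j : nat) := Hsum m j j.
Definition Hc (K : nat) (m : 'I_(K.*2.+1) -> R) := Hsum m K.+1 K.

Definition upd (n : nat) (x : 'I_n -> R) (i : 'I_n) (t : R) : 'I_n -> R :=
  fun k => if k == i then t else x k.

Definition partial (n : nat) (f : ('I_n -> R) -> R) (i : 'I_n) (x : 'I_n -> R) : R :=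
  derive1 (fun t => f (upd x i t)) (x i).

Definition pbracket (n : nat) (f g : ('I_n -> R) -> R) (x : 'I_n -> R) : R :=
  \sum_(i < n) \sum_(k < n) Num.sg (x i - x k) * partial f i x * partial g k x.

Definition inM (n : nat) (x : 'I_n -> R) : Prop :=
  forall i k : 'I_n, (i < k)%N -> x i < x k.

End Peakon.

(* Main.v *)
Require Import Defs.
From HB Require Import structures.
From mathcomp Require Import all_boot all_order all_algebra.
From mathcomp Require Import all_classical all_reals all_analysis.
From mathcomp Require Import ring lra.
Import Order.TTheory GRing.Theory Num.Theory.
Set Implicit Arguments. Unset Strict Implicit. Unset Printing Implicit Defensive.
Local Open Scope ring_scope.

Lemma interlace_nil_r (s : seq nat) : interlace s [::] = s.
Proof. by case: s. Qed.

Lemma interlace_rcons_l (s t : seq nat) x : (size t <= size s)%N ->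
  interlace (rcons s x) t = rcons (interlace s t) x.
Proof.
elim: s t => [|a s IH] [|b t] //=.
by rewrite ltnS => h; rewrite IH.
Qed.

Lemma interlace_rcons_r (s t : seq nat) y : (size t <= size s <= (size t).+1)%N ->
  interlace s (rcons t y) = rcons (interlace s t) y.
Proof.
elim: s t => [|a s IH] [|b t] //=.
- by case: s {IH}.
- by rewrite !ltnS => h; rewrite IH.
Qed.

Lemma mem_interlace (s t : seq nat) x : (x \in interlace s t) = (x \in s) || (x \in t).
Proof.
elim: s t => [|a s IH] [|b t] //=; first by rewrite orbF.
rewrite !inE IH; by case: (x == a); case: (x == b); case: (x \in s); case: (x \in t).
Qed.

Lemma sorted_rcons2 (l : seq nat) u v : sorted ltn (rcons (rcons l u) v) -> (u < v)%N.
Proof.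
case: l => [|c l] /=; first by rewrite andbT.
by rewrite rcons_path last_rcons => /andP[].
Qed.

Lemma sorted_rconsE (l : seq nat) v : (forall y, y \in l -> y < v)%N ->
  sorted ltn (rcons l v) = sorted ltn l.
Proof.
case: l => [|c l] //= H.
by rewrite rcons_path /= (H (last c l)) ?andbT // mem_last.
Qed.

Section Comb.
Variable n : nat.
Implicit Types I J : {set 'I_n}.

Definition bnd (t : nat) I : bool := [forall i, (i \in I) ==> (i < t)%N].

Lemma bndP t I : reflect (forall i, i \in I -> (i < t)%N) (bnd t I).
Proof.
apply: (iffP forallP) => H i; first by move=> iI; have := H i; rewrite iI.
by apply/implyP; apply: H.
Qed.

Lemma size_idxs I : size (idxs I) = #|I|.
Proof. by rewrite /idxs size_sort size_map cardE. Qed.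

Lemma mem_idxs I x : (x \in idxs I) = [exists i, (i \in I) && (val i == x)].
Proof.
rewrite /idxs mem_sort; apply/mapP/existsP => [[i]|[i /andP[iI /eqP <-]]].
  by rewrite mem_enum => iI ->; exists i; rewrite iI eqxx.
by exists i; rewrite ?mem_enum.
Qed.

Lemma idxs_bnd t I x : bnd t I -> x \in idxs I -> (x < t)%N.
Proof.
move=> /bndP H; rewrite mem_idxs => /existsP[i /andP[iI /eqP <-]]; exact: H.
Qed.

Lemma idxsU1 t I (a : 'I_n) : val a = t -> bnd t I ->
  idxs (a |: I) = rcons (idxs I) t.
Proof.
move=> at0 bI.
apply: (sorted_eq leq_trans anti_leq).
- by rewrite /idxs; apply: sort_sorted; exact: leq_total.
- have sI : sorted leq (idxs I) by rewrite /idxs; apply: sort_sorted; exact: leq_total.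
  case E: (idxs I) sI => [|c l] //= sI.
  rewrite rcons_path sI /=.
  apply: ltnW; apply: (idxs_bnd bI); rewrite E mem_last //.
- rewrite /idxs (perm_sort leq) -at0.
  apply: (@perm_trans _ (val a :: [seq val i | i <- enum I])); last first.
    by rewrite perm_sym perm_rcons perm_cons (perm_sort leq).
  have -> : (val a :: [seq val i | i <- enum I]) = [seq val i | i <- a :: enum I] by [].
  apply: perm_map; apply: uniq_perm; first exact: enum_uniq.
  + rewrite /= enum_uniq andbT mem_enum; apply/negP => aI.
    by have := (bndP _ _ bI) a aI; rewrite at0 ltnn.
  + by move=> i; rewrite mem_enum !inE mem_enum.
Qed.

End Comb.

Lemma interlace_rcons2_eq (s0 t0 : seq nat) x y : size s0 = size t0 ->
  interlace (rcons s0 x) (rcons t0 y) = rcons (rcons (interlace s0 t0) x) y.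
Proof.
move=> e; rewrite interlace_rcons_r; last by rewrite size_rcons e leqnSn leqnn.
by rewrite interlace_rcons_l // e.
Qed.

Lemma interlace_rcons2_S (s0 t0 : seq nat) x y : size s0 = (size t0).+1 ->
  interlace (rcons s0 x) (rcons t0 y) = rcons (rcons (interlace s0 t0) y) x.
Proof.
move=> e; rewrite interlace_rcons_l; last by rewrite size_rcons e.
by rewrite interlace_rcons_r // e leqnSn leqnn.
Qed.

Section Comb2.
Variable n : nat.
Implicit Types I J : {set 'I_n}.

Definition cnd (p q : nat) I J : bool := [&& #|I| == p, #|J| == q & interl I J].

Variables (t : nat) (a : 'I_n).
Hypothesis at0 : val a = t.

Lemma notin_bnd I : bnd t I -> a \notin I.
Proof. move=> /bndP H; apply/negP => /H; by rewrite at0 ltnn. Qed.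

Lemma card_U1 I : bnd t I -> #|a |: I| = #|I|.+1.
Proof. by move=> bI; rewrite cardsU1 (notin_bnd bI). Qed.

Lemma interl_U1_l I J : bnd t I -> bnd t J -> #|I| = #|J| ->
  interl (a |: I) J = interl I J.
Proof.
move=> bI bJ e; rewrite /interl (idxsU1 at0 bI) interlace_rcons_l ?size_idxs ?e //.
rewrite sorted_rconsE // => y; rewrite mem_interlace => /orP[] yin.
- exact: idxs_bnd bI yin.
- exact: idxs_bnd bJ yin.
Qed.

Lemma interl_U1_r I J : bnd t I -> bnd t J -> #|I| = #|J|.+1 ->
  interl I (a |: J) = interl I J.
Proof.
move=> bI bJ e; rewrite /interl (idxsU1 at0 bJ) interlace_rcons_r ?size_idxs ?e ?leqnSn ?leqnn //.
rewrite sorted_rconsE // => y; rewrite mem_interlace => /orP[] yin.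
- exact: idxs_bnd bI yin.
- exact: idxs_bnd bJ yin.
Qed.

Lemma interl_U1_l_false I J : bnd t I -> bnd t J -> #|J| = #|I|.+1 ->
  interl (a |: I) J = false.
Proof.
move=> bI bJ e; rewrite /interl (idxsU1 at0 bI).
have : size (idxs J) = (size (idxs I)).+1 by rewrite !size_idxs.
have yJ : forall y, y \in idxs J -> (y < t)%N by move=> y; apply: idxs_bnd.
case/lastP: (idxs J) yJ => [|t0 y] // yJ; rewrite size_rcons => -[e2].
rewrite interlace_rcons2_eq; last by rewrite e2.
apply/negP => /sorted_rcons2.
by rewrite ltnNge ltnW // yJ // mem_rcons mem_head.
Qed.

Lemma interl_U1_r_false I J : bnd t I -> bnd t J -> #|I| = #|J|.+2 ->
  interl I (a |: J) = false.
Proof.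
move=> bI bJ e; rewrite /interl (idxsU1 at0 bJ).
have : size (idxs I) = (size (idxs J)).+2 by rewrite !size_idxs.
have yI : forall y, y \in idxs I -> (y < t)%N by move=> y; apply: idxs_bnd.
case/lastP: (idxs I) yI => [|s0 y] // yI; rewrite size_rcons => -[e2].
rewrite interlace_rcons2_S //.
apply/negP => /sorted_rcons2.
by rewrite ltnNge ltnW // yI // mem_rcons mem_head.
Qed.

Lemma interl_U1_lr_false I J : bnd t I -> bnd t J ->
  (#|I| = #|J|) \/ (#|I| = #|J|.+1) -> interl (a |: I) (a |: J) = false.
Proof.
move=> bI bJ e; rewrite /interl (idxsU1 at0 bI) (idxsU1 at0 bJ).
case: e => e.
- rewrite interlace_rcons2_eq ?size_idxs ?e //.
  by apply/negP => /sorted_rcons2; rewrite ltnn.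
- rewrite interlace_rcons2_S ?size_idxs ?e //.
  by apply/negP => /sorted_rcons2; rewrite ltnn.
Qed.

Lemma cnd0_l p I J : bnd t I -> bnd t J -> cnd p p (a |: I) J = false.
Proof.
move=> bI bJ; rewrite /cnd (card_U1 bI).
case: eqP => //= e1; case: eqP => //= e2.
by apply: interl_U1_l_false; rewrite // e1 e2.
Qed.

Lemma cnd0_r p I J : bnd t I -> bnd t J ->
  cnd p p I (a |: J) = if p is p'.+1 then cnd p p' I J else false.
Proof.
move=> bI bJ; rewrite /cnd (card_U1 bJ).
case: p => [|p] /=; first by rewrite andbF.
rewrite eqSS; case: eqP => //= e1; case: eqP => //= e2.
by apply: interl_U1_r; rewrite // e1 e2.
Qed.

Lemma cnd0_lr p I J : bnd t I -> bnd t J -> cnd p p (a |: I) (a |: J) = false.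
Proof.
move=> bI bJ; rewrite /cnd (card_U1 bI) (card_U1 bJ).
case: eqP => //= e1; case: eqP => //= e2.
by apply: interl_U1_lr_false => //; left; apply: succn_inj; rewrite e1 e2.
Qed.

Lemma cnd1_l p I J : bnd t I -> bnd t J -> cnd p.+1 p (a |: I) J = cnd p p I J.
Proof.
move=> bI bJ; rewrite /cnd (card_U1 bI) eqSS.
case: eqP => //= e1; case: eqP => //= e2.
by apply: interl_U1_l; rewrite // e1 e2.
Qed.

Lemma cnd1_r p I J : bnd t I -> bnd t J -> cnd p.+1 p I (a |: J) = false.
Proof.
move=> bI bJ; rewrite /cnd (card_U1 bJ).
case: eqP => //= e1; case: eqP => //= e2.
by apply: interl_U1_r_false; rewrite // e1 -e2.
Qed.

Lemma cnd1_lr p I J : bnd t I -> bnd t J -> cnd p.+1 p (a |: I) (a |: J) = false.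
Proof.
move=> bI bJ; rewrite /cnd (card_U1 bI) (card_U1 bJ) eqSS.
case: eqP => //= e1; case: eqP => //= e2.
apply: interl_U1_lr_false => //; right; rewrite e1.
by case: p e2 e1 => [|p] //= [->].
Qed.

End Comb2.

Section Sums.
Variable R : realType.
Variable n : nat.
Implicit Types I J X Y : {set 'I_n}.

Lemma bnd_le t t' I : (t <= t')%N -> bnd t I -> bnd t' I.
Proof. by move=> le /bndP H; apply/bndP => i /H /leq_trans; apply. Qed.

Variables (t : nat) (a : 'I_n).
Hypothesis at0 : val a = t.

Lemma bnd_notin I : bnd t.+1 I && (a \notin I) = bnd t I.
Proof.
apply/andP/idP => [[/bndP H aI]|bI].
- apply/bndP => i iI; have := H i iI; rewrite ltnS leq_eqVlt => /orP[/eqP e|//].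
  have ia : i = a by apply: val_inj; rewrite /= e at0.
  by move: aI; rewrite -ia iI.
- split; first exact: (bnd_le (leqnSn t) bI).
  exact: (notin_bnd at0 bI).
Qed.

Lemma bnd_U1 J : (bnd t.+1 (a |: J) && (a \in a |: J)) && ((a |: J) :\ a == J) = bnd t J.
Proof.
apply/idP/idP => [/andP[/andP[b1 _] /eqP e]|bJ].
- have aJ : a \notin J by rewrite -e !inE eqxx.
  rewrite -bnd_notin aJ andbT; apply/bndP => i iJ.
  by apply: (bndP _ _ b1); rewrite !inE iJ orbT.
- have aJ := notin_bnd at0 bJ.
  rewrite (setU1K aJ) eqxx andbT !inE eqxx andbT.
  apply/bndP => i; rewrite !inE => /orP[/eqP ->|iJ]; first by rewrite at0.
  by apply: (bndP _ _ (bnd_le (leqnSn t) bJ)).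
Qed.

Lemma sum_bndS (F : {set 'I_n} -> R) :
  \sum_(I | bnd t.+1 I) F I = \sum_(I | bnd t I) F I + \sum_(I | bnd t I) F (a |: I).
Proof.
rewrite (bigID (fun I => a \in I)) /= addrC; congr (_ + _).
  by apply: eq_bigl => I; rewrite bnd_notin.
rewrite (reindex_onto (fun J => a |: J) (fun I => I :\ a)) /=.
  by apply: eq_bigl => J; rewrite bnd_U1.
by move=> I /andP[_ aI]; rewrite finset.setD1K.
Qed.

Definition Sm (t : nat) (p q : nat) (phi : {set 'I_n} -> {set 'I_n} -> R) : R :=
  \sum_(I | bnd t I) \sum_(J | bnd t J) (if cnd p q I J then phi I J else 0).

Lemma Sm_split p q phi : Sm t.+1 p q phi = Sm t p q phi
  + \sum_(I | bnd t I) \sum_(J | bnd t J) (if cnd p q I (a |: J) then phi I (a |: J) else 0)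
  + \sum_(I | bnd t I) \sum_(J | bnd t J) (if cnd p q (a |: I) J then phi (a |: I) J else 0)
  + \sum_(I | bnd t I) \sum_(J | bnd t J) (if cnd p q (a |: I) (a |: J) then phi (a |: I) (a |: J) else 0).
Proof.
rewrite /Sm sum_bndS.
rewrite (eq_bigr (fun I => \sum_(J | bnd t J) (if cnd p q I J then phi I J else 0) +
   \sum_(J | bnd t J) (if cnd p q I (a |: J) then phi I (a |: J) else 0))); last first.
  by move=> I _; rewrite sum_bndS.
rewrite [X in _ + X](eq_bigr (fun I => \sum_(J | bnd t J) (if cnd p q (a |: I) J then phi (a |: I) J else 0) +
   \sum_(J | bnd t J) (if cnd p q (a |: I) (a |: J) then phi (a |: I) (a |: J) else 0))); last first.
  by move=> I _; rewrite sum_bndS.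
by rewrite !big_split /= !addrA.
Qed.

Lemma Sm_ext t' p q phi phi' :
  (forall I J, bnd t' I -> bnd t' J -> cnd p q I J -> phi I J = phi' I J) ->
  Sm t' p q phi = Sm t' p q phi'.
Proof.
move=> H; apply: eq_bigr => I bI; apply: eq_bigr => J bJ.
by case: ifP => // c; rewrite H.
Qed.

Lemma dsum0 (G : {set 'I_n} -> {set 'I_n} -> R) :
  (forall I J, bnd t I -> bnd t J -> G I J = 0) ->
  \sum_(I | bnd t I) \sum_(J | bnd t J) G I J = 0.
Proof. by move=> H; rewrite big1 // => I bI; rewrite big1 // => J bJ; rewrite H. Qed.

Lemma Sm_rec0 p phi : Sm t.+1 p p phi = Sm t p p phi +
  (if p is p'.+1 then Sm t p p' (fun I J => phi I (a |: J)) else 0).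
Proof.
rewrite Sm_split.
rewrite [X in _ + X]dsum0; last by move=> I J bI bJ; rewrite (cnd0_lr at0).
rewrite [X in _ + X + _]dsum0; last by move=> I J bI bJ; rewrite (cnd0_l at0).
rewrite !addr0; congr (_ + _); case: p => [|p].
  by rewrite dsum0 // => I J bI bJ; rewrite (cnd0_r at0).
by apply: eq_bigr => I bI; apply: eq_bigr => J bJ; rewrite (cnd0_r at0).
Qed.

Lemma Sm_rec1 p phi : Sm t.+1 p.+1 p phi = Sm t p.+1 p phi +
  Sm t p p (fun I J => phi (a |: I) J).
Proof.
rewrite Sm_split.
rewrite [X in _ + X]dsum0; last by move=> I J bI bJ; rewrite (cnd1_lr at0).
rewrite [X in _ + X + _ + _]dsum0; last by move=> I J bI bJ; rewrite (cnd1_r at0).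
rewrite !addr0; congr (_ + _).
by apply: eq_bigr => I bI; apply: eq_bigr => J bJ; rewrite (cnd1_l at0).
Qed.

End Sums.

Section Alg.
Variable R : realType.
Variable n : nat.
Variables h g : 'I_n -> R.
Implicit Types I J X Y : {set 'I_n}.

Definition w I J : R := \prod_(i in I) h i * \prod_(j in J) g j.
Definition eps I J (i : 'I_n) : R := (i \in I)%:R - (i \in J)%:R.
Definition sig (i k : 'I_n) : R := Num.sg ((i : nat)%:R - (k : nat)%:R : R).
Definition Bf I J X Y : R := \sum_i \sum_k sig i k * eps I J i * eps X Y k.
Definition F t p q : R := Sm t p q w.
Definition Q t p q r s : R :=
  Sm t p q (fun I J => Sm t r s (fun X Y => Bf I J X Y * w I J * w X Y)).

Lemma SmD t p q (f1 f2 : {set 'I_n} -> {set 'I_n} -> R) :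
  Sm t p q (fun I J => f1 I J + f2 I J) = Sm t p q f1 + Sm t p q f2.
Proof.
rewrite /Sm.
have E : forall I J, (if cnd p q I J then f1 I J + f2 I J else 0) =
  (if cnd p q I J then f1 I J else 0) + (if cnd p q I J then f2 I J else 0).
  by move=> I J; case: ifP; rewrite ?addr0.
under eq_bigr do under eq_bigr do rewrite E.
under eq_bigr do rewrite big_split /=.
by rewrite big_split.
Qed.

Lemma SmZl t p q c (f : {set 'I_n} -> {set 'I_n} -> R) :
  Sm t p q (fun I J => c * f I J) = c * Sm t p q f.
Proof.
rewrite /Sm mulr_sumr; apply: eq_bigr => I _; rewrite mulr_sumr.
by apply: eq_bigr => J _; case: ifP; rewrite ?mulr0.
Qed.

Lemma SmZr t p q c (f : {set 'I_n} -> {set 'I_n} -> R) :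
  Sm t p q (fun I J => f I J * c) = Sm t p q f * c.
Proof.
rewrite mulrC -SmZl; apply: Sm_ext => I J _ _ _; exact: mulrC.
Qed.

Lemma QQ_gen t p q r s (Phi : {set 'I_n} -> {set 'I_n} -> {set 'I_n} -> {set 'I_n} -> R) c k :
  (forall I J X Y, bnd t I -> bnd t J -> bnd t X -> bnd t Y -> cnd p q I J -> cnd r s X Y ->
     Phi I J X Y = c * (Bf I J X Y * w I J * w X Y + k * (w I J * w X Y))) ->
  Sm t p q (fun I J => Sm t r s (Phi I J)) = c * (Q t p q r s + k * (F t p q * F t r s)).
Proof.
move=> H.
rewrite (@Sm_ext _ _ t p q _ (fun I J => c * (Sm t r s (fun X Y => Bf I J X Y * w I J * w X Y)
    + k * (w I J * F t r s)))); last first.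
  move=> I J bI bJ cIJ.
  rewrite (@Sm_ext _ _ t r s _ (fun X Y => c * ((Bf I J X Y * w I J * w X Y)
    + k * (w I J * w X Y)))); last by move=> X Y bX bY cXY; apply: H.
  by rewrite SmZl SmD SmZl SmZl.
by rewrite SmZl SmD SmZl SmZr.
Qed.

Variables (t : nat) (a : 'I_n).
Hypothesis at0 : val a = t.

Definition addif (b : bool) I := if b then a |: I else I.

Lemma w_mod sI sJ I J : bnd t I -> bnd t J ->
  w (addif sI I) (addif sJ J) = (if sI then h a else 1) * (if sJ then g a else 1) * w I J.
Proof.
move=> bI bJ; rewrite /w /addif.
have aI := notin_bnd at0 bI; have aJ := notin_bnd at0 bJ.
by case: sI; case: sJ; rewrite ?big_setU1 //=; ring.
Qed.

Lemma eps_mod sI sJ I J i : bnd t I -> bnd t J ->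
  eps (addif sI I) (addif sJ J) i = eps I J i + (sI%:R - sJ%:R) * (i == a)%:R.
Proof.
move=> bI bJ; rewrite /eps /addif.
have aI := notin_bnd at0 bI; have aJ := notin_bnd at0 bJ.
case: (eqVneq i a) => [->|ia].
  by case: sI; case: sJ; rewrite ?inE ?eqxx ?(negbTE aI) ?(negbTE aJ) /=; 
     rewrite ?mulr1 ?subr0 ?sub0r ?add0r ?addr0 ?subrr.
by case: sI; case: sJ; rewrite ?inE ?(negbTE ia) /= ?mulr0 ?addr0.
Qed.

Lemma sum_delta (f : 'I_n -> R) : \sum_i f i * (i == a)%:R = f a.
Proof.
rewrite (bigD1 a) //= eqxx mulr1 big1 ?addr0 // => i /negbTE ->; by rewrite mulr0.
Qed.

Lemma sum_ind I : \sum_i ((i \in I)%:R : R) = #|I|%:R.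
Proof.
rewrite -sum1_card natr_sum [RHS]big_mkcond; apply: eq_bigr => i _; by case: (i \in I).
Qed.

Lemma sum_eps I J : \sum_i eps I J i = #|I|%:R - #|J|%:R.
Proof. by rewrite /eps sumrB !sum_ind. Qed.

Lemma sig_lt (i k : 'I_n) : (i < k)%N -> sig k i = 1.
Proof. by move=> ik; rewrite /sig gtr0_sg // subr_gt0 ltr_nat. Qed.

Lemma sig_gt (i k : 'I_n) : (i < k)%N -> sig i k = -1.
Proof. by move=> ik; rewrite /sig ltr0_sg // subr_lt0 ltr_nat. Qed.

Lemma sig_aa : sig a a = 0.
Proof. by rewrite /sig subrr sgr0. Qed.

Lemma eps_out I J i : ~~ (i \in I) -> ~~ (i \in J) -> eps I J i = 0.
Proof. by rewrite /eps => /negbTE -> /negbTE ->; rewrite subrr. Qed.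

Lemma sum_sig_l I J : bnd t I -> bnd t J ->
  \sum_k sig a k * eps I J k = #|I|%:R - #|J|%:R.
Proof.
move=> bI bJ; rewrite -sum_eps; apply: eq_bigr => k _.
case kI: (k \in I); first by rewrite sig_lt ?mul1r // at0 (bndP _ _ bI).
case kJ: (k \in J); first by rewrite sig_lt ?mul1r // at0 (bndP _ _ bJ).
by rewrite eps_out ?kI ?kJ // mulr0.
Qed.

Lemma sum_sig_r I J : bnd t I -> bnd t J ->
  \sum_i sig i a * eps I J i = #|J|%:R - #|I|%:R.
Proof.
move=> bI bJ; rewrite -opprB -sum_eps -sumrN; apply: eq_bigr => k _.
case kI: (k \in I); first by rewrite sig_gt ?mulN1r // at0 (bndP _ _ bI).
case kJ: (k \in J); first by rewrite sig_gt ?mulN1r // at0 (bndP _ _ bJ).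
by rewrite eps_out ?kI ?kJ // mulr0 oppr0.
Qed.

Lemma B_mod sI sJ sX sY I J X Y : bnd t I -> bnd t J -> bnd t X -> bnd t Y ->
  Bf (addif sI I) (addif sJ J) (addif sX X) (addif sY Y) =
  Bf I J X Y + (sI%:R - sJ%:R) * (#|X|%:R - #|Y|%:R) + (sX%:R - sY%:R) * (#|J|%:R - #|I|%:R).
Proof.
move=> bI bJ bX bY; rewrite /Bf.
set al : R := sI%:R - sJ%:R; set be : R := sX%:R - sY%:R.
have E : forall i k, sig i k * eps (addif sI I) (addif sJ J) i * eps (addif sX X) (addif sY Y) k
  = sig i k * eps I J i * eps X Y k + al * ((sig i k * eps X Y k) * (i == a)%:R)
    + be * ((sig i k * eps I J i) * (k == a)%:R)
    + al * be * (sig i k * (i == a)%:R * (k == a)%:R).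
  by move=> i k; rewrite !eps_mod // -/al -/be; ring.
under eq_bigr do under eq_bigr do rewrite E.
have S2 : \sum_i \sum_k al * ((sig i k * eps X Y k) * (i == a)%:R) = al * (#|X|%:R - #|Y|%:R).
  rewrite (eq_bigr (fun i => al * ((\sum_k sig i k * eps X Y k) * (i == a)%:R))); last first.
    by move=> i _; rewrite mulr_suml mulr_sumr.
  by rewrite -mulr_sumr sum_delta sum_sig_l.
have S3 : \sum_i \sum_k be * ((sig i k * eps I J i) * (k == a)%:R) = be * (#|J|%:R - #|I|%:R).
  rewrite -(sum_sig_r bI bJ) mulr_sumr; apply: eq_bigr => i _.
  by rewrite -mulr_sumr sum_delta.
have S4 : \sum_i \sum_k al * be * (sig i k * (i == a)%:R * (k == a)%:R) = 0.
  rewrite (eq_bigr (fun i => al * be * (sig i a * (i == a)%:R))); last first.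
    by move=> i _; rewrite -mulr_sumr sum_delta.
  by rewrite -mulr_sumr sum_delta sig_aa mulr0.
under eq_bigr do rewrite !big_split /=.
by rewrite !big_split /= S2 S3 S4 addr0.
Qed.

End Alg.
Arguments addif : simpl never.

Section Rec.
Variable R : realType.
Variable n : nat.
Variables h g : 'I_n -> R.
Variables (t : nat) (a : 'I_n).
Hypothesis at0 : val a = t.
Implicit Types I J X Y : {set 'I_n}.

Local Notation w := (w h g).
Local Notation F := (F h g).
Local Notation Q := (Q h g).
Local Notation addif := (addif a).
Local Notation Bf := (@Bf R n).

Lemma cnd_card p q I J : cnd p q I J -> #|I| = p /\ #|J| = q.
Proof. by case/and3P => /eqP -> /eqP ->. Qed.

Lemma QQ_mod p q r s sI sJ sX sY :
  Sm t p q (fun I J => Sm t r s (fun X Y =>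
     Bf (addif sI I) (addif sJ J) (addif sX X) (addif sY Y) * w (addif sI I) (addif sJ J) * w (addif sX X) (addif sY Y)))
  = ((if sI then h a else 1) * (if sJ then g a else 1) * ((if sX then h a else 1) * (if sY then g a else 1))) *
    (Q t p q r s + ((sI%:R - sJ%:R) * (r%:R - s%:R) + (sX%:R - sY%:R) * (q%:R - p%:R)) * (F t p q * F t r s)).
Proof.
apply: QQ_gen => I J X Y bI bJ bX bY /cnd_card[cI cJ] /cnd_card[cX cY].
rewrite (B_mod R at0) // !(w_mod h g at0) // cI cJ cX cY.
ring.
Qed.

Lemma Sm_rec0' p (phi : {set 'I_n} -> {set 'I_n} -> R) : Sm t.+1 p p phi = Sm t p p (fun I J => phi (addif false I) (addif false J)) +
  (if p is p'.+1 then Sm t p p' (fun I J => phi (addif false I) (addif true J)) else (0 : R)).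
Proof. by rewrite (Sm_rec0 at0). Qed.

Lemma Sm_rec1' p (phi : {set 'I_n} -> {set 'I_n} -> R) : Sm t.+1 p.+1 p phi = Sm t p.+1 p (fun I J => phi (addif false I) (addif false J)) +
  Sm t p p (fun I J => phi (addif true I) (addif false J)).
Proof. by rewrite (Sm_rec1 at0). Qed.

Lemma Sm_in0 p q r (psi : {set 'I_n} -> {set 'I_n} -> {set 'I_n} -> {set 'I_n} -> R) :
  Sm t p q (fun I J => Sm t.+1 r r (psi I J)) =
  Sm t p q (fun I J => Sm t r r (fun X Y => psi I J (addif false X) (addif false Y))) +
  (if r is r'.+1 then Sm t p q (fun I J => Sm t r r' (fun X Y => psi I J (addif false X) (addif true Y))) else (0 : R)).
Proof.
rewrite (@Sm_ext _ _ t p q _ (fun I J => Sm t r r (fun X Y => psi I J (addif false X) (addif false Y)) +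
  (if r is r'.+1 then Sm t r r' (fun X Y => psi I J (addif false X) (addif true Y)) else (0 : R)))); last first.
  by move=> I J _ _ _; rewrite Sm_rec0'.
rewrite SmD; case: r => [|r] //.
rewrite [X in _ + X](_ : _ = 0) ?addr0 // /Sm big1 // => I _; rewrite big1 // => J _; by case: ifP.
Qed.

Lemma Sm_in1 p q r (psi : {set 'I_n} -> {set 'I_n} -> {set 'I_n} -> {set 'I_n} -> R) :
  Sm t p q (fun I J => Sm t.+1 r.+1 r (psi I J)) =
  Sm t p q (fun I J => Sm t r.+1 r (fun X Y => psi I J (addif false X) (addif false Y))) +
  Sm t p q (fun I J => Sm t r r (fun X Y => psi I J (addif true X) (addif false Y))).
Proof.
rewrite -SmD; apply: Sm_ext => I J _ _ _; by rewrite Sm_rec1'.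
Qed.

Ltac expd := rewrite {1}/Q ?Sm_rec0' ?Sm_rec1' /= ?Sm_in0 ?Sm_in1 /= ?addr0 ?QQ_mod /=.

Lemma E11 p q : Q t.+1 p.+1 p q.+1 q = Q t p.+1 p q.+1 q
  + h a * (Q t p.+1 p q q - F t p.+1 p * F t q q)
  + h a * (Q t p p q.+1 q + F t p p * F t q.+1 q) + h a * h a * Q t p p q q.
Proof. expd. ring. Qed.

Lemma E00_00 : Q t.+1 0 0 0 0 = Q t 0 0 0 0.
Proof. expd. ring. Qed.

Lemma E00_0S q : Q t.+1 0 0 q.+1 q.+1 = Q t 0 0 q.+1 q.+1 + g a * Q t 0 0 q.+1 q.
Proof. expd. ring. Qed.

Lemma E00_S0 p : Q t.+1 p.+1 p.+1 0 0 = Q t p.+1 p.+1 0 0 + g a * Q t p.+1 p 0 0.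
Proof. expd. ring. Qed.

Lemma E00_SS p q : Q t.+1 p.+1 p.+1 q.+1 q.+1 = Q t p.+1 p.+1 q.+1 q.+1
  + g a * Q t p.+1 p.+1 q.+1 q + g a * Q t p.+1 p q.+1 q.+1 + g a * g a * Q t p.+1 p q.+1 q.
Proof. expd. ring. Qed.

Lemma E01_0 q : Q t.+1 0 0 q.+1 q = Q t 0 0 q.+1 q + h a * Q t 0 0 q q.
Proof. expd. ring. Qed.

Lemma E01_S p q : Q t.+1 p.+1 p.+1 q.+1 q = Q t p.+1 p.+1 q.+1 q + h a * Q t p.+1 p.+1 q q
  + g a * (Q t p.+1 p q.+1 q - F t p.+1 p * F t q.+1 q)
  + g a * h a * (Q t p.+1 p q q - F t p.+1 p * F t q q).
Proof. expd. ring. Qed.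

Lemma E10_0 p : Q t.+1 p.+1 p 0 0 = Q t p.+1 p 0 0 + h a * Q t p p 0 0.
Proof. expd. ring. Qed.

Lemma E10_S p q : Q t.+1 p.+1 p q.+1 q.+1 = Q t p.+1 p q.+1 q.+1
  + g a * (Q t p.+1 p q.+1 q + F t p.+1 p * F t q.+1 q) + h a * Q t p p q.+1 q.+1
  + h a * g a * (Q t p p q.+1 q + F t p p * F t q.+1 q).
Proof. expd. ring. Qed.

Lemma Sm_w sI sJ p q : Sm t p q (fun I J => w (addif sI I) (addif sJ J)) =
  (if sI then h a else 1) * (if sJ then g a else 1) * F t p q.
Proof. by rewrite /F -SmZl; apply: Sm_ext => I J bI bJ _; rewrite (w_mod h g at0). Qed.

Lemma F0_0 : F t.+1 0 0 = F t 0 0.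
Proof. by rewrite {1}/F Sm_rec0' Sm_w /= addr0 !mul1r. Qed.

Lemma F0_S p : F t.+1 p.+1 p.+1 = F t p.+1 p.+1 + g a * F t p.+1 p.
Proof. by rewrite {1}/F Sm_rec0' !Sm_w /= !mul1r. Qed.

Lemma F1r p : F t.+1 p.+1 p = F t p.+1 p + h a * F t p p.
Proof. by rewrite {1}/F Sm_rec1' !Sm_w /= !mul1r ?mulr1. Qed.

End Rec.

Section Inv.
Variable R : realType.
Variable n : nat.
Variables h g : 'I_n -> R.
Local Notation F := (F h g).
Local Notation Q := (Q h g).

Record Inv (t : nat) : Prop := {
  ia : forall p q, Q t p p q q = 0;
  ib : forall p q, Q t p.+1 p q.+1 q = 0;
  ic : forall p q, Q t p p q.+1 q = F t p.+1 p * F t q q - F t p p * F t q.+1 q - Q t p.+1 p q q;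
  id : forall p q, Q t p.+1 p.+1 q.+1 q = - Q t p.+1 p q.+1 q.+1;
  ie : forall q, Q t 0 0 q.+1 q = 0;
  ie' : forall p, Q t p.+1 p 0 0 = 0 }.

Lemma Inv_step t (a : 'I_n) : val a = t -> Inv t -> Inv t.+1.
Proof.
move=> at0 [Ha Hb Hc Hd He He'].
have Hc' : forall p q, Q t p p q.+1 q + Q t p.+1 p q q = F t p.+1 p * F t q q - F t p p * F t q.+1 q.
  by move=> p q; rewrite Hc; ring.
split.
- case=> [|p] [|q].
  + by rewrite (E00_00 h g at0) Ha.
  + by rewrite (E00_0S h g at0) Ha He; ring.
  + by rewrite (E00_S0 h g at0) Ha He'; ring.
  + by rewrite (E00_SS h g at0) Ha Hb Hd; ring.
- by move=> p q; rewrite (E11 h g at0) Ha Hb Hc; ring.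
- move=> p q.
  suff e : Q t.+1 p p q.+1 q + Q t.+1 p.+1 p q q = F t.+1 p.+1 p * F t.+1 q q - F t.+1 p p * F t.+1 q.+1 q.
    by rewrite -e; ring.
  case: p => [|p]; case: q => [|q].
  + rewrite (E01_0 h g at0) (E10_0 h g at0) !(F0_0 h g at0) !(F1r h g at0) !Ha (Hc 0 0); ring.
  + rewrite (E01_0 h g at0) (E10_S h g at0) !(F0_0 h g at0) !(F0_S h g at0) !(F1r h g at0) !Ha (Hc 0 q.+1) (Hb 0 q) (He q); ring.
  + rewrite (E01_S h g at0) (E10_0 h g at0) !(F0_0 h g at0) !(F0_S h g at0) !(F1r h g at0) !Ha (Hc p.+1 0) (Hb p 0) (He' p); ring.
  + rewrite (E01_S h g at0) (E10_S h g at0) !(F0_S h g at0) !(F1r h g at0) !Ha (Hc p.+1 q.+1) (Hb p q.+1) (Hb p.+1 q) (Hd p q); ring.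
- by move=> p q; rewrite (E01_S h g at0) (E10_S h g at0) (Hd p q) (Hc p q) !Ha !Hb; ring.
- by move=> q; rewrite (E01_0 h g at0) Ha He; ring.
- by move=> p; rewrite (E10_0 h g at0) Ha He'; ring.
Qed.

End Inv.


Section Base.
Variable R : realType.
Variable n : nat.
Variables h g : 'I_n -> R.
Local Notation F := (F h g).
Local Notation Q := (Q h g).
Implicit Types I J X Y : {set 'I_n}.

Lemma bnd0 I : bnd 0 I -> I = finset.set0.
Proof.
move=> bI; apply/setP => i; rewrite inE; apply/negbTE/negP => /(bndP _ _ bI).
by rewrite ltn0.
Qed.

Lemma Sm_zero t p q (phi : {set 'I_n} -> {set 'I_n} -> R) :
  (forall I J, bnd t I -> bnd t J -> cnd p q I J -> phi I J = 0) -> Sm t p q phi = 0.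
Proof.
move=> H; rewrite (@Sm_ext _ _ t p q _ (fun I J => 0 * w h g I J)); last first.
  by move=> I J bI bJ c; rewrite mul0r H.
by rewrite SmZl mul0r.
Qed.

Lemma Q0 p q r s : Q 0 p q r s = 0.
Proof.
apply: Sm_zero => I J bI bJ _; apply: Sm_zero => X Y _ _ _.
rewrite (bnd0 bI) (bnd0 bJ) /Bf big1 ?mul0r // => i _; rewrite big1 // => k _.
by rewrite /eps !inE subrr mulr0 mul0r.
Qed.

Lemma F0S p : F 0 p.+1 p = 0.
Proof.
apply: Sm_zero => I J bI bJ /cnd_card[cI _].
by move: cI; rewrite (bnd0 bI) cards0.
Qed.

Lemma Inv0 : Inv h g 0.
Proof. by split=> *; rewrite ?Q0 ?F0S ?mul0r ?mulr0 ?subrr ?oppr0. Qed.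

Lemma Inv_all t : (t <= n)%N -> Inv h g t.
Proof.
elim: t => [|t IH] tn; first exact: Inv0.
have tn' : (t < n)%N by [].
apply: (@Inv_step _ _ h g t (Ordinal tn')) => //.
by apply: IH; apply: ltnW.
Qed.

Lemma core p q : Q n p p q q = 0.
Proof. by have [Ha _ _ _ _ _] := Inv_all (leqnn n); apply: Ha. Qed.

Lemma bndn I : bnd n I.
Proof. by apply/bndP => i _; apply: ltn_ord. Qed.

End Base.

Section Analytic.
Variable R : realType.
Variable n : nat.
Implicit Types I J X Y : {set 'I_n}.

Lemma is_derive_big (T : finType) (P : pred T) (f : T -> R -> R) (df : T -> R) (x0 : R) :
  (forall i, P i -> is_derive x0 1 (f i) (df i)) ->
  is_derive x0 1 (fun t => \sum_(i | P i) f i t) (\sum_(i | P i) df i).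
Proof.
move=> H.
suff : forall r, is_derive x0 1 (fun t => \sum_(i <- r | P i) f i t) (\sum_(i <- r | P i) df i) by apply.
elim => [|j r IH].
  have -> : (fun t => \sum_(i <- [::] | P i) f i t) = cst 0 by apply: funext => t; rewrite big_nil.
  rewrite big_nil; exact: is_derive_cst.
case Pj: (P j).
  have -> : (fun t => \sum_(i <- j :: r | P i) f i t) = f j + (fun t => \sum_(i <- r | P i) f i t).
    by apply: funext => t; rewrite big_cons Pj.
  rewrite big_cons Pj; apply: is_deriveD => //; exact: H.
have -> : (fun t => \sum_(i <- j :: r | P i) f i t) = (fun t => \sum_(i <- r | P i) f i t).
  by apply: funext => t; rewrite big_cons Pj.
by rewrite big_cons Pj.
Qed.

Lemma is_derive_expaff (C e c x0 : R) :
  is_derive x0 1 (fun t => C * expR (e * t + c)) (C * (expR (e * x0 + c) * e)).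
Proof.
have h1 := is_deriveD (is_deriveZ e (@is_derive_id _ R^o x0 1)) (@is_derive_cst _ R^o R^o c x0 1).
have h2 := @is_derive1_comp R expR (e \*: (@id R) + cst c) x0 _ _ (is_derive_expR _) h1.
have h3 := is_deriveZ C h2.
apply: is_derive_eq h3 _.
change (C * (expR (e * x0 + c) * (e * 1 + 0)) = C * (expR (e * x0 + c) * e)).
by rewrite mulr1 addr0.
Qed.

Variables (m : 'I_n -> R) (x : 'I_n -> R).
Definition hx (i : 'I_n) : R := m i * expR (x i).
Definition gx (i : 'I_n) : R := m i * expR (- x i).

Lemma Hsum_Sm (p q : nat) (phi : {set 'I_n} -> {set 'I_n} -> R) :
  \sum_(I : {set 'I_n} | #|I| == p) \sum_(J : {set 'I_n} | (#|J| == q) && interl I J) phi I J = Sm n p q phi.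
Proof.
rewrite /Sm big_mkcond [RHS](eq_bigl (fun _ => true)); last by move=> I; rewrite bndn.
apply: eq_bigr => I _; rewrite [RHS](eq_bigl (fun _ => true)); last by move=> J; rewrite bndn.
case: eqP => [cI|cI].
  rewrite big_mkcond; apply: eq_bigr => J _; by rewrite /cnd cI eqxx.
by rewrite big1 // => J _; rewrite /cnd; case: eqP.
Qed.

Lemma hI_upd I i t : hI m I (upd x i t) = hI m I x * expR ((i \in I)%:R * (t - x i)).
Proof.
rewrite /hI; case iI: (i \in I).
- rewrite (bigD1 i) //= [in RHS](bigD1 i) //= /upd eqxx mul1r.
  have -> : \prod_(j in I | j != i) (m j * expR (if j == i then t else x j)) =
            \prod_(j in I | j != i) (m j * expR (x j)).
    by apply: eq_bigr => j /andP[_ /negbTE ->].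
  have -> : expR t = expR (x i) * expR (t - x i) by rewrite -expRD addrC subrK.
  ring.
- rewrite mul0r expR0 mulr1; apply: eq_bigr => j jI; rewrite /upd.
  by case: eqP => // ji; move: iI; rewrite -ji jI.
Qed.

Lemma gJ_upd J i t : gJ m J (upd x i t) = gJ m J x * expR (- ((i \in J)%:R * (t - x i))).
Proof.
rewrite /gJ; case iJ: (i \in J).
- rewrite (bigD1 i) //= [in RHS](bigD1 i) //= /upd eqxx mul1r.
  have -> : \prod_(j in J | j != i) (m j * expR (- (if j == i then t else x j))) =
            \prod_(j in J | j != i) (m j * expR (- x j)).
    by apply: eq_bigr => j /andP[_ /negbTE ->].
  have -> : expR (- t) = expR (- x i) * expR (- (t - x i)) by rewrite -expRD; congr expR; ring.
  ring.
- rewrite mul0r oppr0 expR0 mulr1; apply: eq_bigr => j jI; rewrite /upd.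
  by case: eqP => // ji; move: iJ; rewrite -ji jI.
Qed.

Lemma term_upd I J i t : hI m I (upd x i t) * gJ m J (upd x i t) =
  w hx gx I J * expR (eps R I J i * t + - (eps R I J i * x i)).
Proof.
rewrite hI_upd gJ_upd.
have -> : eps R I J i * t + - (eps R I J i * x i) =
  (i \in I)%:R * (t - x i) + - ((i \in J)%:R * (t - x i)) by rewrite /eps; ring.
rewrite expRD /w /hx /gx /hI /gJ; ring.
Qed.

Lemma partial_Hsum p q i :
  partial (Hsum m p q) i x = Sm n p q (fun I J => eps R I J i * w hx gx I J).
Proof.
rewrite /partial derive1E.
have -> : (fun t => Hsum m p q (upd x i t)) = (fun t => \sum_(I : {set 'I_n} | #|I| == p)
   \sum_(J : {set 'I_n} | (#|J| == q) && interl I J) w hx gx I J * expR (eps R I J i * t + - (eps R I J i * x i))).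
  apply: funext => t; rewrite /Hsum; apply: eq_bigr => I _; apply: eq_bigr => J _.
  exact: term_upd.
have D : is_derive (x i) 1 (fun t => \sum_(I : {set 'I_n} | #|I| == p)
   \sum_(J : {set 'I_n} | (#|J| == q) && interl I J) w hx gx I J * expR (eps R I J i * t + - (eps R I J i * x i)))
   (\sum_(I : {set 'I_n} | #|I| == p) \sum_(J : {set 'I_n} | (#|J| == q) && interl I J)
      (w hx gx I J * (expR (eps R I J i * x i + - (eps R I J i * x i)) * eps R I J i))).
  apply: is_derive_big => I _.
  apply: (@is_derive_big _ _ (fun J t => w hx gx I J * expR (eps R I J i * t + - (eps R I J i * x i)))) => J _.
  exact: is_derive_expaff.
rewrite (@derive_val _ _ _ _ _ _ _ D) -Hsum_Sm.
apply: eq_bigr => I _; apply: eq_bigr => J _.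
by rewrite subrr expR0 mul1r mulrC.
Qed.

End Analytic.

Section Struct.
Variable R : realType.
Variable n : nat.
Implicit Types I J : {set 'I_n}.

Definition alt (t : nat) (k : 'I_n) : R := if (k < t)%N then (-1) ^+ k else 0.

Lemma decomp t (a : 'I_n) I : val a = t -> bnd t.+1 I ->
  exists2 I', bnd t I' & (I = addif a false I' \/ I = addif a true I').
Proof.
move=> at0 bI; case aI: (a \in I).
- exists (I :\ a).
    rewrite -(bnd_notin at0); apply/andP; split; last by rewrite !inE eqxx.
    apply/bndP => i; rewrite !inE => /andP[_ iI].
    exact: (bndP _ _ bI).
  by right; rewrite /addif finset.setD1K.
- by exists I; [rewrite -(bnd_notin at0) aI andbT | left].
Qed.

Lemma struct_all t : (t <= n)%N -> forall I J, bnd t I -> bnd t J ->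
  (forall p, cnd p p I J -> (p.*2 <= t)%N /\ (p.*2 = t -> forall k, eps R I J k = alt t k)) /\
  (forall p, cnd p.+1 p I J -> (p.*2.+1 <= t)%N /\ (p.*2.+1 = t -> forall k, eps R I J k = alt t k)).
Proof.
elim: t => [|t IH] tn I J bI bJ.
  rewrite (bnd0 bI) (bnd0 bJ); split => p /cnd_card[c1 c2]; rewrite cards0 in c1.
    by rewrite -c1; split => // _ k; rewrite /eps /alt !inE subrr.
  by [].
have tn' : (t < n)%N by [].
set a := Ordinal tn'.
have at0 : val a = t by [].
have [I' bI' eI] := decomp at0 bI.
have [J' bJ' eJ] := decomp at0 bJ.
have [IH0 IH1] := IH (ltnW tn) I' J' bI' bJ'.
have epsE := fun sI sJ k => @eps_mod R n t a at0 sI sJ I' J' k bI' bJ'.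
have altS : forall k, alt t.+1 k = alt t k + (if (k == a) then (-1) ^+ t else 0).
  move=> k; rewrite /alt ltnS leq_eqVlt; case: (eqVneq k a) => [->|ka] /=.
    by rewrite eqxx ltnn add0r.
  have -> : (val k == t) = false by apply/negbTE; apply: contra ka => /eqP e; apply/eqP/val_inj.
  by rewrite addr0.
split => p.
- case: eI => ->; case: eJ => ->; rewrite /addif.
  + move=> /IH0[le e]; split; first exact: leq_trans le (leqnSn _).
    by move=> e2; move: le; rewrite e2 ltnn.
  + rewrite (cnd0_r at0) //; case: p => [|p] //= /IH1[le e]; split.
      by rewrite doubleS ltnS.
    move=> [e2] k; rewrite -/(addif a false I') -/(addif a true J') epsE (e e2) altS.
    rewrite -e2; case: (k == a) => /=; last by rewrite mulr0 addr0.
    by rewrite sub0r mulr1 -signr_odd /= odd_double /= expr1.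
  + by rewrite (cnd0_l at0).
  + by rewrite (cnd0_lr at0).
- case: eI => ->; case: eJ => ->; rewrite /addif.
  + move=> /IH1[le e]; split; first exact: leq_trans le (leqnSn _).
    by move=> e2; move: le; rewrite e2 ltnn.
  + by rewrite (cnd1_r at0).
  + rewrite (cnd1_l at0) // => /IH0[le e]; split; first by [].
    move=> [e2] k; rewrite -/(addif a true I') -/(addif a false J') epsE (e e2) altS.
    rewrite -e2; case: (k == a) => /=; last by rewrite mulr0 addr0.
    by rewrite subr0 mulr1 -signr_odd /= odd_double /= expr0.
  + by rewrite (cnd1_lr at0).
Qed.

End Struct.

Section AltSum.
Variable R : realType.

Lemma altT (i N : nat) : \sum_(0 <= k < N) (Num.sg (i%:R - k%:R : R) * (-1) ^+ k) =
  if (N <= i)%N then (odd N)%:R else (odd i)%:R + (if odd N == odd i then (-1) ^+ i else 0).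
Proof.
elim: N => [|N IH]; first by rewrite big_nil leq0n.
rewrite big_nat_recr //= IH.
case: (ltngtP N i) => [Ni|iN|->].
- rewrite gtr0_sg ?subr_gt0 ?ltr_nat // mul1r -signr_odd.
  by case: (odd N) => /=; rewrite ?expr0 ?expr1 ?addr0 ?add0r ?subrr.
- rewrite ltr0_sg ?subr_lt0 ?ltr_nat // mulN1r.
  rewrite -[(-1) ^+ N]signr_odd -[(-1) ^+ i]signr_odd; case: (odd N); case: (odd i) => /=; rewrite ?expr0 ?expr1 ?opprK ?addr0 ?add0r; lra.
- rewrite subrr sgr0 mul0r addr0.
  by case: (odd i) => /=; rewrite addr0.
Qed.

Lemma alt_zero K (i : nat) : (i < K.*2.+1)%N ->
  \sum_(0 <= k < K.*2.+1) (Num.sg (i%:R - k%:R : R) * (-1) ^+ k) = 0.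
Proof.
move=> iK; rewrite altT leqNgt iK /= odd_double /=.
rewrite -signr_odd; case: (odd i) => /=; rewrite ?expr1 ?subrr //.
by rewrite addr0.
Qed.

End AltSum.

Section Final.
Variable R : realType.
Variable n : nat.
Implicit Types I J X Y : {set 'I_n}.

Lemma Sm_sum (T : finType) t p q (f : T -> {set 'I_n} -> {set 'I_n} -> R) :
  Sm t p q (fun I J => \sum_(i : T) f i I J) = \sum_(i : T) Sm t p q (f i).
Proof.
rewrite /Sm.
have E : forall I J, (if cnd p q I J then \sum_(i : T) f i I J else 0) =
   \sum_(i : T) (if cnd p q I J then f i I J else 0).
  by move=> I J; case: ifP => // _; rewrite big1.
under eq_bigr do under eq_bigr do rewrite E.
rewrite [RHS]exchange_big /=; apply: eq_bigr => I _.
by rewrite [RHS]exchange_big.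
Qed.

Lemma Q_expand (h g : 'I_n -> R) t p q r s : Q h g t p q r s =
  \sum_i \sum_k sig R i k * Sm t p q (fun I J => eps R I J i * w h g I J)
                         * Sm t r s (fun X Y => eps R X Y k * w h g X Y).
Proof.
rewrite /Q.
rewrite (@Sm_ext _ _ t p q _ (fun I J => \sum_i \sum_k Sm t r s (fun X Y =>
     (sig R i k * (eps R I J i * w h g I J)) * (eps R X Y k * w h g X Y)))); last first.
  move=> I J _ _ _.
  rewrite (@Sm_ext _ _ t r s _ (fun X Y => \sum_i \sum_k
     (sig R i k * (eps R I J i * w h g I J)) * (eps R X Y k * w h g X Y))); last first.
    move=> X Y _ _ _; rewrite /Bf !mulr_suml; apply: eq_bigr => i _.
    rewrite !mulr_suml; apply: eq_bigr => k _; ring.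
  rewrite Sm_sum; apply: eq_bigr => i _; by rewrite Sm_sum.
rewrite Sm_sum; apply: eq_bigr => i _.
rewrite (@Sm_ext _ _ t p q _ (fun I J => \sum_k (sig R i k * (eps R I J i * w h g I J)) *
   Sm t r s (fun X Y => eps R X Y k * w h g X Y))); last first.
  by move=> I J _ _ _; apply: eq_bigr => k _; rewrite SmZl.
rewrite Sm_sum; apply: eq_bigr => k _.
by rewrite SmZr SmZl.
Qed.

Lemma sg_inM (x : 'I_n -> R) (i k : 'I_n) : inM x -> Num.sg (x i - x k) = sig R i k.
Proof.
move=> hx; case: (ltngtP i k) => [ik|ki|e].
- by rewrite (sig_gt R ik) ltr0_sg // subr_lt0 hx.
- by rewrite (sig_lt R ki) gtr0_sg // subr_gt0 hx.
- have -> : i = k by apply: val_inj.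
  by rewrite /sig !subrr sgr0.
Qed.

Lemma sig_anti (i k : 'I_n) : sig R i k = - sig R k i.
Proof. by rewrite /sig -sgrN opprB. Qed.

Variables (m x : 'I_n -> R).

Lemma pbr p q r s : inM x ->
  pbracket (Hsum m p q) (Hsum m r s) x =
  \sum_i \sum_k sig R i k * Sm n p q (fun I J => eps R I J i * w (hx m x) (gx m x) I J)
                         * Sm n r s (fun X Y => eps R X Y k * w (hx m x) (gx m x) X Y).
Proof.
move=> hM; rewrite /pbracket; apply: eq_bigr => i _; apply: eq_bigr => k _.
by rewrite !partial_Hsum sg_inM.
Qed.

End Final.

Unset Implicit Arguments.
Set Strict Implicit.

Theorem theorem5 (R : realType) (K : nat) (m : 'I_(K.*2.+1) -> R)
  (hm : forall i, 0 < m i) :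
  (forall j1 j2 : nat, (1 <= j1 <= K)%N -> (1 <= j2 <= K)%N ->
     forall x : 'I_(K.*2.+1) -> R, inM x ->
       pbracket (Hj m j1) (Hj m j2) x = 0) /\
  (forall j : nat, (1 <= j <= K)%N ->
     forall x : 'I_(K.*2.+1) -> R, inM x ->
       pbracket (Hj m j) (Hc m) x = 0 /\ pbracket (Hc m) (Hj m j) x = 0).
Proof.
split.
  move=> j1 j2 _ _ x hM; rewrite /Hj pbr // -Q_expand; exact: core.
move=> j _ x hM.
set n := K.*2.+1.
have Z : forall i : 'I_n, \sum_k sig R i k * Sm n K.+1 K (fun X Y => eps R X Y k * w (hx m x) (gx m x) X Y) = 0.
  move=> i.
  under eq_bigr do rewrite -SmZl.
  rewrite -Sm_sum; apply: (@Sm_zero R n (hx m x) (gx m x)) => I J _ _ cIJ.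
  have [_ S1] := struct_all R (leqnn n) (bndn I) (bndn J).
  have [_ S2] := S1 _ cIJ.
  have E := S2 erefl.
  rewrite (eq_bigr (fun k : 'I_n => (sig R i k * (-1) ^+ k) * w (hx m x) (gx m x) I J)); last first.
    by move=> k _; rewrite E /alt ltn_ord mulrA.
  rewrite -mulr_suml.
  have -> : \sum_(k < n) sig R i k * (-1) ^+ k = 0.
    have := alt_zero R (ltn_ord i); rewrite big_mkord => H; exact: H.
  by rewrite mul0r.
split.
- rewrite /Hj /Hc pbr //.
  rewrite (eq_bigr (fun i => Sm n j j (fun I J => eps R I J i * w (hx m x) (gx m x) I J) * 0)).
    by rewrite big1 // => i _; rewrite mulr0.
  move=> i _; transitivity (Sm n j j (fun I J => eps R I J i * w (hx m x) (gx m x) I J) *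
    \sum_k sig R i k * Sm n K.+1 K (fun X Y => eps R X Y k * w (hx m x) (gx m x) X Y)); last by rewrite Z.
  rewrite mulr_sumr; apply: eq_bigr => k _; ring.
- rewrite /Hj /Hc pbr // exchange_big /=.
  rewrite (eq_bigr (fun k => - (Sm n j j (fun I J => eps R I J k * w (hx m x) (gx m x) I J) * 0))).
    by rewrite big1 // => i _; rewrite mulr0 oppr0.
  move=> k _; transitivity (- (Sm n j j (fun I J => eps R I J k * w (hx m x) (gx m x) I J) *
    \sum_i sig R k i * Sm n K.+1 K (fun X Y => eps R X Y i * w (hx m x) (gx m x) X Y))); last by rewrite Z.
  rewrite mulr_sumr -sumrN; apply: eq_bigr => i _.
  rewrite sig_anti; ring.
Qed.
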